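(* Let $S$ be a non-empty poset and $(\mathcal{L},\rightharpoonup)=(L,\wedge,\vee,0,1)$ a complete lattice with an $S$-action. If $\mathcal{L}$ is multiplication, then $\mathcal{L}$ is $Spec^p(\mathcal{L})$-top; that is, with $X=Spec^p(\mathcal{L})$ and $V(a)=\{p\in X: a\leq p\}$ for $a\in L$, the family $\{V(a): a\in L\}$ is closed under finite unions.
   Context: An $S$-action on a lattice $(L,\wedge,\vee)$ is a map $\rightharpoonup:S\times L\to L$ such that $s_1\leq s_2\Rightarrow s_1\rightharpoonup x\leq s_2\rightharpoonup x$; $x\leq y\Rightarrow s\rightharpoonup x\leq s\rightharpoonup y$; and $s\rightharpoonup x\leq x$. The bounded lattice with $S$-action is multiplication iff every $x\in L$ equals $s\rightharpoonup 1$ for some $s\in S$. An element $x\in L\setminus\{1\}$ is prime iff for all $y\in L$ and $s\in S$: $s\rightharpoonup y\leq x$ implies $s\rightharpoonup 1\leq x$ or $y\leq x$; $Spec^p(\mathcal{L})$ is the set of prime elements. *)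

(* Defs.v *)
From mathcomp Require Import all_boot all_order.
Set Implicit Arguments. Unset Strict Implicit. Unset Printing Implicit Defensive.
Import Order.TTheory.
Local Open Scope order_scope.

Definition is_S_action (dS dL : Order.disp_t) (S : porderType dS)
  (L : latticeType dL) (act : S -> L -> L) : Prop :=
  [/\ (forall (s1 s2 : S) (x : L), s1 <= s2 -> act s1 x <= act s2 x),
      (forall (s : S) (x y : L), x <= y -> act s x <= act s y) &
      (forall (s : S) (x : L), act s x <= x)].

Definition complete_lattice (dL : Order.disp_t) (L : tbLatticeType dL) : Prop :=
  forall A : L -> Prop, exists s : L,
    (forall x, A x -> x <= s) /\ (forall u, (forall x, A x -> x <= u) -> s <= u).

Definition multiplication (dS dL : Order.disp_t) (S : porderType dS)
  (L : tbLatticeType dL) (act : S -> L -> L) : Prop :=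
  forall x : L, exists s : S, x = act s \top.

Definition prime_elt (dS dL : Order.disp_t) (S : porderType dS)
  (L : tbLatticeType dL) (act : S -> L -> L) (x : L) : Prop :=
  x != \top /\
  forall (y : L) (s : S), act s y <= x -> act s \top <= x \/ y <= x.

Definition Vset (dS dL : Order.disp_t) (S : porderType dS)
  (L : tbLatticeType dL) (act : S -> L -> L) (a : L) : L -> Prop :=
  fun p => prime_elt act p /\ a <= p.

(* L is X-top for X = Spec^p(L): {V a | a in L} closed under finite unions
   (empty union and binary unions) *)
Definition Specp_top (dS dL : Order.disp_t) (S : porderType dS)
  (L : tbLatticeType dL) (act : S -> L -> L) : Prop :=
  (exists c : L, forall p, ~ Vset act c p) /\
  (forall a b : L, exists c : L, forall p,
      Vset act c p <-> (Vset act a p \/ Vset act b p)).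

(* Main.v *)
Require Import Defs.
From mathcomp Require Import all_boot all_order.
Import Order.TTheory.
Local Open Scope order_scope.

Theorem mainTheorem9 (dS : Order.disp_t) (S : porderType dS)
  (dL : Order.disp_t) (L : tbLatticeType dL) (act : S -> L -> L) :
  inhabited S ->
  complete_lattice L ->
  is_S_action act ->
  multiplication act ->
  Specp_top act.
Proof.
move=> _ _ [_ Hmon Hle] Hmul; split.
  exists \top => p [[Hp _] Htp].
  by move: Hp; rewrite eq_le Htp lex1.
move=> a b; exists (a `&` b) => p; split.
  move=> [[Hp Hpr] Hab].
  have [s Hs] := Hmul a.
  have H1 : act s b <= a `&` b.
    rewrite lexI Hle andbT Hs; apply: Hmon; exact: lex1.
  case: (Hpr b s (le_trans H1 Hab)) => H.
    by left; split => //; rewrite Hs.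
  by right.
case=> [[Hp Ha]|[Hp Hb]]; split => //.
  exact: le_trans (leIl _ _) Ha.
exact: le_trans (leIr _ _) Hb.
Qed.
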